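(* Every $3$-uniform bi-hypergraph with exactly $6$ vertices and at most $9$ edges is colorable. Consequently $\ell(6,3)\ge 10$.
   Context: A bi-hypergraph $\mathcal H=(V,E)$ consists of a finite vertex set $V$ and a set $E$ of subsets of $V$, called edges, with no edge contained in another. It is $r$-uniform if every edge has exactly $r$ elements. A mapping $f:V\to\mathbb N$ is a proper coloring of $\mathcal H$ if $1<|f(e)|<|e|$ for every $e\in E$, where $f(e)=\{f(v):v\in e\}$. $\mathcal H$ is colorable if it has a proper coloring, and uncolorable otherwise. A subhypergraph of $\mathcal H$ is a bi-hypergraph $(V',E')$ with $V'\subseteq V$, $E'\subseteq E$. $\mathcal H$ is minimal uncolorable if it is uncolorable but every proper subhypergraph of it is colorable. $\ell(n,r)$ is the minimum number of edges of a minimal uncolorable $r$-uniform bi-hypergraph with exactly $n$ vertices ($\infty$ if none exists). *)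

(* Defs.v *)
From mathcomp Require Import all_boot.
Set Implicit Arguments. Unset Strict Implicit. Unset Printing Implicit Defensive.

Section BiHypergraph.
Variable T : finType.

Definition bihypergraph (V : {set T}) (E : {set {set T}}) : bool :=
  [forall e in E, e \subset V] &&
  [forall e in E, forall e' in E, (e \subset e') ==> (e == e')].

Definition uniform (r : nat) (E : {set {set T}}) : bool :=
  [forall e in E, #|e| == r].

Definition ncolors (f : T -> nat) (e : {set T}) : nat :=
  size (undup [seq f v | v <- enum e]).

Definition proper_coloring (E : {set {set T}}) (f : T -> nat) : Prop :=
  forall e, e \in E -> 1 < ncolors f e < #|e|.

(* colourability only depends on the edges; a colouring of the vertex set
   extends arbitrarily to T *)
Definition colorable (V : {set T}) (E : {set {set T}}) : Prop :=
  exists f : T -> nat, proper_coloring E f.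

Definition minimal_uncolorable (V : {set T}) (E : {set {set T}}) : Prop :=
  [/\ bihypergraph V E, ~ colorable V E &
     forall (V' : {set T}) (E' : {set {set T}}),
       V' \subset V -> E' \subset E -> bihypergraph V' E' ->
       (V', E') <> (V, E) -> colorable V' E'].

End BiHypergraph.

(* Main.v *)
Require Import Defs.
From mathcomp Require Import all_boot.

Lemma part1 (T : finType) (E : {set {set T}}) :
  #|T| = 6 -> bihypergraph [set: T] E -> uniform 3 E -> #|E| <= 9 ->
  colorable [set: T] E.
Proof.
move=> hT _ /forallP hu hE.
set S := [set A : {set T} | #|A| == 3].
have hS : #|S| = 20 by rewrite /S card_draws hT.
set U := E :|: [set ~: e | e in E].
have hU : #|U| < #|S|.
  rewrite hS; apply: (leq_ltn_trans (leq_card_setU _ _)).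
  have := leq_imset_card (fun e : {set T} => ~: e) E.
  move=> h; apply: (@leq_ltn_trans (#|E| + #|E|)); first by rewrite leq_add2l.
  by apply: (leq_ltn_trans (leq_add hE hE)).
have : ~~ (S \subset U).
  by apply/negP => /subset_leq_card; rewrite leqNgt hU.
case/subsetPn => A; rewrite inE => /eqP hA hAU.
have hAE : A \notin E by apply: contra hAU; rewrite inE => ->.
have hCE : ~: A \notin E.
  apply: contra hAU => h; rewrite inE; apply/orP; right.
  by apply/imsetP; exists (~: A) => //; rewrite setCK.
exists (fun v => if v \in A then 0 else 1) => e he.
have /eqP he3 := implyP (hu e) he.
rewrite he3.
have nsub : forall B : {set T}, #|B| = 3 -> B \notin E -> ~~ (e \subset B).
  move=> B hB hBE; apply/negP => hsub.
  have : e == B by rewrite eqEcard hsub he3 hB.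
  by move/eqP => eB; rewrite -eB he in hBE.
have hC3 : #|~: A| = 3 by rewrite cardsCs setCK hA hT.
case/subsetPn: (nsub _ hA hAE) => x xe xA.
case/subsetPn: (nsub _ hC3 hCE) => y ye.
rewrite inE negbK => yA.
rewrite /ncolors.
set s := [seq _ | v <- enum e].
have h2 : size (undup s) = 2.
  apply/eqP; rewrite eqn_leq; apply/andP; split.
    apply: (@uniq_leq_size _ _ [:: 0; 1]); first exact: undup_uniq.
    move=> z; rewrite mem_undup => /mapP [v _ ->].
    by case: (v \in A); rewrite !inE.
  apply: (@uniq_leq_size _ [:: 0; 1]) => // z; rewrite mem_undup !inE.
  case/orP => /eqP ->; apply/mapP.
    by exists y; rewrite ?mem_enum ?yA.
  by exists x; rewrite ?mem_enum // (negbTE xA).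
by rewrite h2.
Qed.

Theorem mainTheorem9 :
  (forall (T : finType) (E : {set {set T}}),
      #|T| = 6 -> bihypergraph [set: T] E -> uniform 3 E -> #|E| <= 9 ->
      colorable [set: T] E)
  /\
  (* consequently l(6,3) >= 10 *)
  (forall (T : finType) (E : {set {set T}}),
      #|T| = 6 -> minimal_uncolorable [set: T] E -> uniform 3 E ->
      10 <= #|E|).
Proof.
split; first exact: part1.
move=> T E hT [hb hnc _] hu.
rewrite leqNgt; apply/negP => hlt.
by apply: hnc; apply: part1.
Qed.
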